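(* If an $n$-agent network is $k$-redundant with $k\ge 1$, then $$\mathcal X^*=\bigcap_{i=1}^n\{x\in\mathbb R^d: A_i^\top A_ix=A_i^\top b_i\}.$$
   Context: An $n$-agent network: agents $\mathcal V=\{1,\dots,n\}$, each agent $i$ having real matrices $A_i\in\mathbb R^{r_i\times d}$, $b_i\in\mathbb R^{r_i}$; $A$, $b$ are the vertical stackings of the $A_i$, $b_i$, and $\mathcal X^*=\arg\min_x\|Ax-b\|_2^2=\arg\min_x\sum_{i=1}^n\|A_ix-b_i\|_2^2$. The network is $k$-redundant ($k\in\{0,1,\dots,n-1\}$) if for any $\mathcal S_1,\mathcal S_2\subset\mathcal V$ with $|\mathcal S_1|=|\mathcal S_2|=n-k$, $\arg\min_x\sum_{i\in\mathcal S_1}\|A_ix-b_i\|_2^2=\arg\min_x\sum_{i\in\mathcal S_2}\|A_ix-b_i\|_2^2$. *)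

(* Defs.v *)
From HB Require Import structures.
From mathcomp Require Import all_boot all_order all_algebra.
From mathcomp Require Import reals.
Set Implicit Arguments. Unset Strict Implicit. Unset Printing Implicit Defensive.
Import Order.TTheory GRing.Theory Num.Theory.
Local Open Scope ring_scope.

Definition sqnorm (R : realType) (m : nat) (v : 'cV[R]_m) : R :=
  \sum_(j < m) (v j 0) ^+ 2.

Definition cost (R : realType) (n d : nat) (r : 'I_n -> nat)
    (A : forall i : 'I_n, 'M[R]_(r i, d)) (b : forall i : 'I_n, 'cV[R]_(r i))
    (S : {set 'I_n}) (x : 'cV[R]_d) : R :=
  \sum_(i in S) sqnorm (A i *m x - b i).

Definition is_argmin (R : realType) (n d : nat) (r : 'I_n -> nat)
    (A : forall i : 'I_n, 'M[R]_(r i, d)) (b : forall i : 'I_n, 'cV[R]_(r i))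
    (S : {set 'I_n}) (x : 'cV[R]_d) : Prop :=
  forall y : 'cV[R]_d, cost A b S x <= cost A b S y.

Definition k_redundant (R : realType) (n d : nat) (r : 'I_n -> nat)
    (A : forall i : 'I_n, 'M[R]_(r i, d)) (b : forall i : 'I_n, 'cV[R]_(r i))
    (k : nat) : Prop :=
  forall S1 S2 : {set 'I_n}, #|S1| = (n - k)%N -> #|S2| = (n - k)%N ->
    forall x : 'cV[R]_d, is_argmin A b S1 x <-> is_argmin A b S2 x.

(* Main.v *)
Require Import Defs.
From HB Require Import structures.
From mathcomp Require Import all_boot all_order all_algebra.
From mathcomp Require Import reals.
From mathcomp Require Import ring lra zify.
Import Order.TTheory GRing.Theory Num.Theory.
Local Open Scope ring_scope.

Section S.
Variable R : realType.

Lemma sqnormE m (v : 'cV[R]_m) : sqnorm v = (v^T *m v) 0 0.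
Proof. rewrite /sqnorm !mxE; apply: eq_bigr => j _; by rewrite mxE expr2. Qed.

Lemma sqnorm_ge0 m (v : 'cV[R]_m) : 0 <= sqnorm v.
Proof. by apply: sumr_ge0 => j _; rewrite sqr_ge0. Qed.

Lemma sqnorm_eq0 m (v : 'cV[R]_m) : sqnorm v = 0 -> v = 0.
Proof.
move=> /eqP; rewrite /sqnorm psumr_eq0; last by move=> j _; rewrite sqr_ge0.
move=> /allP H; apply/matrixP => j k; rewrite [k]ord1 mxE.
have := H j (mem_index_enum j). rewrite /= sqrf_eq0. by move/eqP.
Qed.

Lemma scal_tr m (u w : 'cV[R]_m) : (u^T *m w) 0 0 = (w^T *m u) 0 0.
Proof. rewrite -[in RHS](trmxK u) -trmx_mul. by rewrite [RHS]mxE. Qed.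

Variables (n d : nat) (r : 'I_n -> nat)
    (A : forall i : 'I_n, 'M[R]_(r i, d)) (b : forall i : 'I_n, 'cV[R]_(r i)).

Definition g i (x : 'cV[R]_d) := (A i)^T *m (A i *m x - b i).
Definition grad (S : {set 'I_n}) x := \sum_(i in S) g i x.

Lemma expand1 i (y z : 'cV[R]_d) :
  sqnorm (A i *m y - b i) = sqnorm (A i *m z - b i)
    + 2 * ((y - z)^T *m g i z) 0 0 + sqnorm (A i *m (y - z)).
Proof.
set u := A i *m z - b i; set w := A i *m (y - z).
have -> : A i *m y - b i = u + w by rewrite /u /w mulmxBr [RHS]addrC addrA subrK.
rewrite !sqnormE /g -/u.
have -> : ((y - z)^T *m ((A i)^T *m u)) 0 0 = (w^T *m u) 0 0.
  by rewrite /w trmx_mul mulmxA.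
have tD : (u+w)^T = u^T + w^T by apply/matrixP=> a c; rewrite !mxE.
have aE : forall M N : 'M[R]_1, (M + N) 0 0 = M 0 0 + N 0 0 by move=> M N; rewrite mxE.
clearbody u w. rewrite tD !mulmxDl !mulmxDr !aE (scal_tr _ u w).
rewrite mulr2n mulrDl mul1r !addrA.
ring.
Qed.

Lemma expand S (y z : 'cV[R]_d) :
  cost A b S y = cost A b S z + 2 * ((y - z)^T *m grad S z) 0 0
     + \sum_(i in S) sqnorm (A i *m (y - z)).
Proof.
rewrite /cost /grad mulmx_sumr summxE mulr_sumr -!big_split /=.
by apply: eq_bigr => i _; rewrite (expand1 i y z).
Qed.

Lemma argmin_of_grad S z : grad S z = 0 -> is_argmin A b S z.
Proof.
move=> Hg y; rewrite (expand S y z) Hg mulmx0 mxE mulr0 addr0 lerDl.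
by apply: sumr_ge0 => i _; apply: sqnorm_ge0.
Qed.

Lemma argmin_eq S z x : grad S z = 0 -> is_argmin A b S x ->
  forall i, i \in S -> A i *m x = A i *m z.
Proof.
move=> Hg Hx.
have := Hx z; rewrite (expand S x z) Hg mulmx0 mxE mulr0 addr0 gerDl => Hs.
have H0 : \sum_(i in S) sqnorm (A i *m (x - z)) = 0.
  by apply/eqP; rewrite eq_le Hs sumr_ge0 // => i _; apply: sqnorm_ge0.
move=> i iS.
have /sqnorm_eq0 : sqnorm (A i *m (x - z)) = 0.
  by move/psumr_eq0P: H0; apply => // j _; apply: sqnorm_ge0.
by rewrite mulmxBr => /eqP; rewrite subr_eq0 => /eqP.
Qed.

Lemma grad_of_argmin S z x : grad S z = 0 -> is_argmin A b S x -> grad S x = 0.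
Proof.
move=> Hg Hx; rewrite -Hg; apply: eq_bigr => i iS.
by rewrite /g (@argmin_eq _ _ _ Hg Hx _ iS).
Qed.

Lemma lemma_ker (S : {set 'I_n}) (v : 'cV[R]_d) :
  (\sum_(i in S) (A i)^T *m A i) *m v = 0 -> forall i : 'I_n, i \in S -> A i *m v = 0.
Proof.
move=> Hv.
have : (v^T *m ((\sum_(i in S) (A i)^T *m A i) *m v)) 0 0 = 0.
  by rewrite Hv mulmx0 mxE.
rewrite mulmx_suml mulmx_sumr summxE.
under eq_bigr => i _ do rewrite !mulmxA -trmx_mul -mulmxA -sqnormE.
move=> H i iS; apply: sqnorm_eq0; move/psumr_eq0P: H; apply=> // j _.
exact: sqnorm_ge0.
Qed.

Lemma exists_sol (S : {set 'I_n}) : exists z, grad S z = 0.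
Proof.
set N := \sum_(i in S) (A i)^T *m A i.
set c := \sum_(i in S) (A i)^T *m b i.
have gE : forall z, grad S z = N *m z - c.
  move=> z; rewrite /grad /g /N /c mulmx_suml -sumrB; apply: eq_bigr => i _.
  by rewrite mulmxBr mulmxA.
have NT : N^T = N.
  by rewrite /N linear_sum; apply: eq_bigr => i _; rewrite /= trmx_mul trmxK.
have : (c^T <= N)%MS.
  rewrite submxE; apply/eqP.
  have HK : forall i, i \in S -> A i *m cokermx N = 0.
    move=> i iS; apply/matrixP => a j.
    have H := @lemma_ker S (col j (cokermx N)).
    have Nv : N *m col j (cokermx N) = 0.
      by rewrite colE mulmxA mulmx_coker mul0mx.
    have H2 := H Nv i iS.
    have e : col j (A i *m cokermx N) = A i *m col j (cokermx N). rewrite !colE. apply: esym; apply: mulmxA.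
    transitivity (col j (A i *m cokermx N) a 0); first by rewrite [RHS]mxE.
    by rewrite e H2 !mxE.
  rewrite /c linear_sum mulmx_suml big1 // => i iS.
  by rewrite /= trmx_mul trmxK -mulmxA HK // mulmx0.
move=> /submxP [D HD].
exists D^T; rewrite gE.
have -> : c = N *m D^T by rewrite -[in RHS]NT -trmx_mul -HD trmxK.
by rewrite subrr.
Qed.

End S.

Lemma sub_card (T : finType) (B : {set T}) m : (m <= #|B|)%N ->
  exists U : {set T}, U \subset B /\ #|U| = m.
Proof.
move=> hm; exists [set x in take m (enum B)]; split.
  by apply/subsetP => x; rewrite inE => /mem_take; rewrite mem_enum.
rewrite cardsE (card_uniqP _) ?take_uniq ?enum_uniq // size_takel //.
by rewrite -cardE.
Qed.

Arguments g {R n d r} A b i x.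
Arguments grad {R n d r} A b S x.
Lemma main_lemma (R : realType) (n d : nat) (r : 'I_n -> nat)
    (A : forall i : 'I_n, 'M[R]_(r i, d)) (b : forall i : 'I_n, 'cV[R]_(r i))
    (k : nat) (hk1 : (1 <= k)%N) (hkn : (k < n)%N) :
  k_redundant A b k ->
  exists z0, forall i, g A b i z0 = 0.
Proof.
move=> Hred.
have hT : ((n - k) <= #|[set: 'I_n]|)%N by rewrite cardsT card_ord leq_subr.
have [S0 [_ hS0]] := @sub_card _ _ _ hT.
have [z0 Hz0] := @exists_sol _ _ _ _ A b S0.
have Hall : forall S : {set 'I_n}, #|S| = (n - k)%N -> grad A b S z0 = 0.
  move=> S hS; have [z Hz] := @exists_sol _ _ _ _ A b S.
  apply: (@grad_of_argmin _ _ _ _ A b S z z0 Hz).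
  by apply/(Hred S0 S hS0 hS z0); exact: (@argmin_of_grad _ _ _ _ A b S0 z0).
have Heq : forall i j, g A b i z0 = g A b j z0.
  move=> i j; case: (eqVneq i j) => [->//|ij].
  have hc : (n - k - 1 <= #|[set: 'I_n] :\ i :\ j|)%N.
    have := cardsD1 j ([set: 'I_n] :\ i); have := cardsD1 i [set: 'I_n].
    rewrite cardsT card_ord !inE eq_sym ij /=.
    rewrite !add1n => h1 h2. move: h1 h2; move: (#|[set: 'I_n] :\ i :\ j|) => c2; move: (#|[set: 'I_n] :\ i|) => c1. move=> h1 h2; clear -hk1 hkn h1 h2; lia.
  have [U [sU hU]] := @sub_card _ _ _ hc.
  have iU : i \notin U.
    by apply/negP => /(subsetP sU); rewrite !inE eqxx andbF.
  have jU : j \notin U.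
    by apply/negP => /(subsetP sU); rewrite !inE eqxx.
  have h1 : #|i |: U| = (n - k)%N by rewrite cardsU1 iU hU; lia.
  have h2 : #|j |: U| = (n - k)%N by rewrite cardsU1 jU hU; lia.
  have := Hall _ h1; have := Hall _ h2.
  rewrite /grad (big_setU1 _ iU) (big_setU1 _ jU) /= => E2 E1.
  by apply: (@addIr _ (\sum_(l in U) g A b l z0)); rewrite E1 E2.
exists z0 => i.
have := Hall _ hS0; rewrite /grad (eq_bigr (fun=> g A b i z0)); last first.
  by move=> j _; rewrite (Heq j i).
rewrite sumr_const hS0 => H.
apply/matrixP => a c.
have := congr1 (fun M : 'M[R]_(d,1) => M a c) H; rewrite /= mulmxnE !mxE => /eqP.
rewrite mulrn_eq0 => /orP [|/eqP //].
move=> /eqP; lia.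
Qed.

Theorem proposition1 (R : realType) (n d : nat) (r : 'I_n -> nat)
    (A : forall i : 'I_n, 'M[R]_(r i, d)) (b : forall i : 'I_n, 'cV[R]_(r i))
    (k : nat) (hk1 : (1 <= k)%N) (hkn : (k < n)%N) :
  k_redundant A b k ->
  forall x : 'cV[R]_d,
    is_argmin A b [set: 'I_n] x <->
    (forall i : 'I_n, (A i)^T *m A i *m x = (A i)^T *m b i).
Proof.
move=> Hred x.
have [z0 Hg0] := @main_lemma _ _ _ _ A b k hk1 hkn Hred.
have G0 : grad A b [set: 'I_n] z0 = 0 by apply: big1 => i _; apply: Hg0.
split.
- move=> Hx i.
  have Ai := @argmin_eq _ _ _ _ A b _ _ _ G0 Hx i (in_setT i).
  apply/eqP; rewrite -subr_eq0 -mulmxA -mulmxBr Ai.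
  by apply/eqP; apply: Hg0.
- move=> H; apply: (@argmin_of_grad _ _ _ _ A b); apply: big1 => i _.
  by rewrite /g mulmxBr mulmxA H subrr.
Qed.
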